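(* Let $\mathcal{P}$ satisfy properties (a)–(f). For every ordering $e_1,\ldots,e_N$ of the edges of $K_n$ and every $t\in[N]$, $R(t)\le \mathrm{ex}(G(n,t))$.
   Context: All graphs are vertex-labelled, simple and undirected. Let $\mathcal{P}$ be a class of graphs such that: (a) $\mathcal{P}$ is not the class of all graphs; (b) it contains all edgeless graphs; (c) it is closed under isomorphism; (d) it is closed under taking minors; (e) it is weakly addable, i.e. if $G\in\mathcal{P}$ and $u,v$ lie in different components of $G$ then $G+uv\in\mathcal{P}$; (f) if $G\in\mathcal{P}$ and $u,v$ are non-adjacent vertices in the same component of $G$ which is a tree, then $G+uv\in\mathcal{P}$. Let $N=\binom{n}{2}$. Given an ordering $e_1,\ldots,e_N$ of the edges of $K_n$: $P(n,0)$ is the empty graph on $[n]$; for $t\in[N]$, $P(n,t)=P(n,t-1)+e_t$ if $P(n,t-1)+e_t\in\mathcal{P}$ ($e_t$ accepted), and $P(n,t)=P(n,t-1)$ otherwise ($e_t$ rejected). $R(t):=t-e(P(n,t))$ where $e(H)$ is the number of edges. $G(n,t)$ is the graph on $[n]$ with edge set $\{e_1,\ldots,e_t\}$. The excess of a graph $H$ is $\mathrm{ex}(H):=e(H)-|V(H)|+\kappa(H)$, where $\kappa(H)$ is the number of tree components of $H$. *)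

(* Defs.v *)
From mathcomp Require Import all_boot all_order all_algebra.
From mathcomp Require Import boolp.
Set Implicit Arguments. Unset Strict Implicit. Unset Printing Implicit Defensive.
Import GRing.Theory Num.Theory.

(* A graph on vertex set [n] = 'I_n is given by its edge set
   E : {set {set 'I_n}}; it is simple when every edge has exactly 2 ends. *)
Definition simple_graph n (E : {set {set 'I_n}}) : Prop :=
  forall e, e \in E -> #|e| = 2.

Definition adj n (E : {set {set 'I_n}}) : rel 'I_n :=
  fun u v => [set u; v] \in E.

Definition connected_in n (E : {set {set 'I_n}}) (B : {set 'I_n}) : Prop :=
  B != set0 /\
  forall u v, u \in B -> v \in B ->
    connect (fun x y => [&& x \in B, y \in B & adj E x y]) u v.

(* H = ('I_m, F) is a minor of G = ('I_n, E): branch sets model. *)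
Definition is_minor m (F : {set {set 'I_m}}) n (E : {set {set 'I_n}}) : Prop :=
  exists f : 'I_m -> {set 'I_n},
    [/\ forall i, connected_in E (f i),
        forall i j, i != j -> [disjoint f i & f j] &
        forall i j, [set i; j] \in F ->
          exists x y, [/\ x \in f i, y \in f j & adj E x y]].

Definition graph_iso m (F : {set {set 'I_m}}) n (E : {set {set 'I_n}}) : Prop :=
  exists f : 'I_m -> 'I_n, bijective f /\
    forall u v, adj F u v = adj E (f u) (f v).

(* the component of u is a tree: it contains no cycle *)
Definition tree_comp n (E : {set {set 'I_n}}) (u : 'I_n) : Prop :=
  ~ exists c : seq 'I_n,
      [/\ 2 < size c, uniq c, cycle (adj E) c & all (connect (adj E) u) c].

Definition comp n (E : {set {set 'I_n}}) (u : 'I_n) : {set 'I_n} :=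
  [set v | connect (adj E) u v].

Definition kappa n (E : {set {set 'I_n}}) : nat :=
  #|[set comp E u | u in [set u : 'I_n | `[< tree_comp E u >] ]]|.

Local Open Scope ring_scope.
Definition excess n (E : {set {set 'I_n}}) : int :=
  (#|E|%:Z - n%:Z + (kappa E)%:Z)%R.
Local Close Scope ring_scope.

Definition graph_class := forall n : nat, pred {set {set 'I_n}}.

Fixpoint proc (P : graph_class) n (s : seq {set 'I_n}) (E : {set {set 'I_n}})
  : {set {set 'I_n}} :=
  match s with
  | [::] => E
  | e :: s' => proc P s' (if P n (e |: E) then e |: E else E)
  end.

Definition Pnt (P : graph_class) n (s : seq {set 'I_n}) (t : nat) :=
  proc P (take t s) set0.

Definition Gnt n (s : seq {set 'I_n}) (t : nat) : {set {set 'I_n}} :=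
  [set e in take t s].

Definition edge_ordering n (s : seq {set 'I_n}) : Prop :=
  uniq s /\ forall e : {set 'I_n}, (e \in s) = (#|e| == 2).

Definition propA (P : graph_class) : Prop :=
  exists n (E : {set {set 'I_n}}), simple_graph E /\ ~~ P n E.
Definition propB (P : graph_class) : Prop := forall n, P n set0.
Definition propC (P : graph_class) : Prop :=
  forall m n (F : {set {set 'I_m}}) (E : {set {set 'I_n}}),
    simple_graph F -> simple_graph E -> graph_iso F E -> P n E -> P m F.
Definition propD (P : graph_class) : Prop :=
  forall m n (F : {set {set 'I_m}}) (E : {set {set 'I_n}}),
    simple_graph F -> simple_graph E -> is_minor F E -> P n E -> P m F.
Definition propE (P : graph_class) : Prop :=
  forall n (E : {set {set 'I_n}}) (u v : 'I_n),
    simple_graph E -> P n E -> ~~ connect (adj E) u v ->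
    P n ([set u; v] |: E).
Definition propF (P : graph_class) : Prop :=
  forall n (E : {set {set 'I_n}}) (u v : 'I_n),
    simple_graph E -> P n E -> u != v -> ~~ adj E u v ->
    connect (adj E) u v -> tree_comp E u -> P n ([set u; v] |: E).

Definition good_class (P : graph_class) : Prop :=
  [/\ propA P, propB P, propC P, propD P & propE P] /\ propF P.

(* Main.v *)
Require Import Defs.
From mathcomp Require Import all_boot all_order all_algebra.
From mathcomp Require Import boolp zify.
Import GRing.Theory Num.Theory.
Set Implicit Arguments. Unset Strict Implicit. Unset Printing Implicit Defensive.

Section G.
Variable n : nat.
Implicit Types (E F : {set {set 'I_n}}) (u v w x y : 'I_n).

Lemma adj_sym E : symmetric (adj E).
Proof. by move=> x y; rewrite /adj setUC. Qed.

Lemma csym E x y : connect (adj E) x y = connect (adj E) y x.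
Proof. exact: (sym_connect_sym (adj_sym E)). Qed.

Lemma conn_ind (e : rel 'I_n) (S : pred 'I_n) x y :
  S x -> (forall a b, S a -> e a b -> S b) -> connect e x y -> S y.
Proof.
move=> Sx cl /connectP [p pth ->]; elim: p x Sx pth => //= a p IH x Sx /andP[exa pth].
exact: (IH a (cl _ _ Sx exa)).
Qed.

Lemma adjU E u v x y :
  adj ([set u; v] |: E) x y = ([set x; y] == [set u; v]) || adj E x y.
Proof. by rewrite /adj in_setU1. Qed.

Lemma pair_in u v x y : [set x; y] == [set u; v] -> (u == x) || (u == y).
Proof. move/eqP=> h; have : u \in [set u; v] by rewrite !inE eqxx. by rewrite -h !inE. Qed.

Lemma pair_inv u v x y : [set x; y] == [set u; v] -> (v == x) || (v == y).
Proof. by rewrite [[set u; v]]setUC; apply: pair_in. Qed.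

Lemma pair_inx u v x y : [set x; y] == [set u; v] -> (x == u) || (x == v).
Proof. by rewrite eq_sym; apply: pair_in. Qed.

Lemma pair_iny u v x y : [set x; y] == [set u; v] -> (y == u) || (y == v).
Proof. by rewrite eq_sym; apply: pair_inv. Qed.

Lemma connect_mono E F x y : E \subset F -> connect (adj E) x y -> connect (adj F) x y.
Proof. move=> sEF; apply: connect_sub => a b h; apply: connect1; exact: (subsetP sEF). Qed.

Lemma tree_mono E F u : F \subset E -> tree_comp E u -> tree_comp F u.
Proof.
move=> sFE tE [c [sz uc cyc al]]; apply: tE; exists c; split=> //.
- by apply: sub_cycle cyc => a b; apply: (subsetP sFE).
- by apply/allP => z /(allP al); apply: connect_mono.
Qed.

Lemma tree_conn E u w : connect (adj E) u w -> tree_comp E u -> tree_comp E w.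
Proof.
move=> uw tu [c [sz uc cyc al]]; apply: tu; exists c; split=> //.
by apply/allP => z /(allP al) wz; apply: connect_trans uw wz.
Qed.

Lemma comp_conn E u w : connect (adj E) u w -> Defs.comp E u = Defs.comp E w.
Proof.
move=> uw; apply/setP => z; rewrite !inE; apply/idP/idP => h.
- by apply: connect_trans h; rewrite csym.
- exact: connect_trans uw h.
Qed.

Lemma connU E u v x y : connect (adj ([set u; v] |: E)) x y ->
  [|| connect (adj E) x y, connect (adj E) x u && connect (adj E) v y
    | connect (adj E) x v && connect (adj E) u y].
Proof.
apply: (conn_ind (S := fun y => [|| connect (adj E) x y, connect (adj E) x u && connect (adj E) v y
    | connect (adj E) x v && connect (adj E) u y])); first by rewrite /= connect0.
move=> a b Sa; rewrite adjU => /orP [pe|ab]; last first.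
  have ab' := connect1 ab.
  case/or3P: Sa => [h|/andP[h1 h2]|/andP[h1 h2]].
  - by rewrite (connect_trans h ab').
  - by rewrite h1 (connect_trans h2 ab') orbT.
  - by rewrite h1 (connect_trans h2 ab') !orbT.
case/orP: (pair_inx pe) => /eqP ea; case/orP: (pair_iny pe) => /eqP eb; subst a b => //.
- case/or3P: Sa => [h|/andP[h1 h2]|/andP[h1 h2]].
  + by rewrite h connect0 orbT.
  + by rewrite h1 connect0 orbT.
  + by rewrite h1.
- case/or3P: Sa => [h|/andP[h1 h2]|/andP[h1 h2]].
  + by rewrite h connect0 !orbT.
  + by rewrite h1.
  + by rewrite h1 connect0 !orbT.
Qed.

Lemma cyc_conn E x p : cycle (adj E) (x :: p) -> all (connect (adj E) x) (x :: p).
Proof.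
move=> cyc; apply/allP => z zin; move: cyc.
rewrite /= rcons_path => /andP[pth _]; exact: (path_connect pth).
Qed.

Lemma cycC_rot E u v p : ~~ connect (adj E) u v -> uniq (u :: p) -> 1 < size p ->
  path (adj ([set u; v] |: E)) u (rcons p u) -> path (adj E) u (rcons p u).
Proof.
move=> nuv; case: p => [|a p1] //; case/lastP: p1 => [|q b] // uq _.
rewrite rcons_cons /= rcons_path last_rcons => /andP[ua /andP[pth bu]].
have nu : all (predC1 u) (a :: rcons q b).
  by apply/allP => z zin /=; apply/eqP => ez; subst z; move: uq; rewrite /= zin.
have pE : path (adj E) a (rcons q b).
  apply: (sub_in_path (P := predC1 u) (e := adj ([set u; v] |: E)) _ nu pth) => x y /= xu yu; rewrite adjU => /orP[pe|//].
  by case/orP: (pair_in pe) => /eqP ex; [move: xu|move: yu]; rewrite !inE -ex eqxx.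
have cab : connect (adj E) a b by apply: (path_connect pE); rewrite inE mem_rcons inE eqxx orbT.
have bnu : b != u by apply/eqP => eb; move: uq; rewrite /= eb !(mem_rcons, inE) eqxx !orbT.
have anb : a != b by apply/eqP => eb; move: uq; rewrite /= eb !(mem_rcons, inE) eqxx /= !andbF.
move: ua bu; rewrite !adjU => /orP[pe|ua] /orP[pe'|bu].
- case/orP: (pair_inv pe) => /eqP ev.
    by move: nuv; rewrite ev connect0.
  case/orP: (pair_inx pe') => /eqP eb; first by rewrite eb eqxx in bnu.
  by rewrite -ev eb eqxx in anb.
- case/orP: (pair_inv pe) => /eqP ev; first by move: nuv; rewrite ev connect0.
  by move: nuv; rewrite csym ev (connect_trans cab (connect1 bu)).
- case/orP: (pair_inx pe') => /eqP eb; first by rewrite eb eqxx in bnu.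
  by move: nuv; rewrite -eb (connect_trans (connect1 ua) cab).
- by rewrite rcons_path last_rcons ua pE bu.
Qed.

Lemma cycC E u v c : ~~ connect (adj E) u v -> uniq c -> 2 < size c ->
  cycle (adj ([set u; v] |: E)) c -> cycle (adj E) c.
Proof.
move=> nuv uc sz cyc; case uin: (u \in c); last first.
  apply: (sub_in_cycle _ (allss c) cyc) => x y xc yc; rewrite adjU => /orP[pe|//].
  by case/orP: (pair_in pe) => /eqP e; [move: xc|move: yc]; rewrite -e uin.
case: (rot_to uin) => i p ep.
rewrite -(rot_cycle i) ep; move: cyc; rewrite -(rot_cycle i) ep /=.
apply: cycC_rot => //; first by rewrite -ep rot_uniq.
by move: sz; rewrite -(size_rot i) ep.
Qed.


Definition A E := [set Defs.comp E w | w in [set w | `[< tree_comp E w >]]].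

Lemma kappaA E : kappa E = #|A E|.
Proof. by []. Qed.

Lemma inA E X : reflect (exists w, tree_comp E w /\ X = Defs.comp E w) (X \in A E).
Proof.
apply: (iffP imsetP) => [[w]|[w [tw ->]]].
  by rewrite inE => /asboolP tw ->; exists w.
by exists w => //; rewrite inE; apply/asboolP.
Qed.

Lemma local E u v w z : ~~ connect (adj E) w u -> ~~ connect (adj E) w v ->
  connect (adj ([set u; v] |: E)) w z = connect (adj E) w z.
Proof.
move=> nu nv; apply/idP/idP => [/connU|]; last by apply: connect_mono; apply: subsetUr.
by rewrite (negbTE nu) (negbTE nv) /= !orbF.
Qed.

Lemma keep E u v w : tree_comp E w -> ~~ connect (adj E) w u -> ~~ connect (adj E) w v ->
  Defs.comp E w \in A ([set u; v] |: E).
Proof.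
move=> tw nu nv; apply/inA; exists w; split.
  move=> [c [sz uc cyc al]]; apply: tw; exists c.
  have al' : all (connect (adj E) w) c.
    by apply/allP => z /(allP al); rewrite local.
  split=> //.
  apply: (sub_in_cycle (P := connect (adj E) w) _ al' cyc) => x y xw yw.
  rewrite adjU => /orP[pe|//].
  by case/orP: (pair_inx pe) => /eqP ex; [move: nu|move: nv]; rewrite -ex; move: xw; rewrite /in_mem /= => ->.
by apply/setP => z; rewrite !inE local.
Qed.

Lemma Asub E u v X : X \in A E -> u \notin X -> v \notin X -> X \in A ([set u; v] |: E).
Proof.
case/inA => w [tw ->]; rewrite !inE => nu nv; exact: keep.
Qed.

Lemma Au E u X : X \in A E -> u \in X -> X = Defs.comp E u /\ tree_comp E u.
Proof.
case/inA => w [tw ->]; rewrite inE => wu; split; first exact: comp_conn.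
exact: tree_conn wu tw.
Qed.

Lemma K2 E u v : connect (adj E) u v -> ~ tree_comp E u ->
  kappa E <= kappa ([set u; v] |: E).
Proof.
move=> cuv ntu; rewrite !kappaA; apply: subset_leq_card; apply/subsetP => X XA.
case: (boolP (u \in X)) => uX; first by case: (Au XA uX).
case: (boolP (v \in X)) => vX; last exact: Asub.
case: (Au XA vX) => _ tv; case: ntu; apply: tree_conn tv; by rewrite csym.
Qed.

Lemma H E u v : ~~ connect (adj E) u v -> tree_comp E u -> tree_comp E v ->
  tree_comp ([set u; v] |: E) u.
Proof.
move=> nuv tu tv [c [sz uc cyc al]].
have cE := cycC nuv uc sz cyc.
case: c sz uc cyc al cE => [|x p] // sz uc cyc al cE.
have cx := cyc_conn cE.
have := allP al x (mem_head _ _) => /connU /or3P [ux|/andP[_ vx]|/andP[uv _]].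
- apply: tu; exists (x :: p); split=> //.
  by apply/allP => z /(allP cx) xz; apply: connect_trans ux xz.
- apply: tv; exists (x :: p); split=> //.
  by apply/allP => z /(allP cx) xz; apply: connect_trans vx xz.
- by rewrite uv in nuv.
Qed.

Lemma K1 E u v : kappa E <= (kappa ([set u; v] |: E)).+1.
Proof.
rewrite !kappaA; set E' := [set u; v] |: E.
have step : forall Y, A E \subset Y |: A E' -> #|A E| <= (#|A E'|).+1.
  move=> Y sub; apply: (leq_trans (subset_leq_card sub)).
  by rewrite cardsU1; case: (Y \notin A E').
case: (boolP (connect (adj E) u v)) => cuv.
  apply: (step (Defs.comp E u)); apply/subsetP => X XA; rewrite in_setU1.
  case: (boolP (u \in X)) => uX; first by case: (Au XA uX) => ->; rewrite eqxx.
  case: (boolP (v \in X)) => vX; last by rewrite Asub ?orbT.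
  by case: (Au XA vX) => -> _; rewrite (comp_conn cuv) eqxx.
have [tu|ntu] := pselect (tree_comp E u); last first.
  apply: (step (Defs.comp E v)); apply/subsetP => X XA; rewrite in_setU1.
  case: (boolP (u \in X)) => uX; first by case: (Au XA uX).
  case: (boolP (v \in X)) => vX; last by rewrite Asub ?orbT.
  by case: (Au XA vX) => -> _; rewrite eqxx.
have [tv|ntv] := pselect (tree_comp E v); last first.
  apply: (step (Defs.comp E u)); apply/subsetP => X XA; rewrite in_setU1.
  case: (boolP (v \in X)) => vX; first by case: (Au XA vX).
  case: (boolP (u \in X)) => uX; last by rewrite Asub ?orbT.
  by case: (Au XA uX) => -> _; rewrite eqxx.
set Y := Defs.comp E' u.
have YA : Y \in A E' by apply/inA; exists u; split=> //; exact: H.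
have sub : A E \subset Defs.comp E u |: (Defs.comp E v |: (A E' :\ Y)).
  apply/subsetP => X XA; rewrite !in_setU1 in_setD1.
  case: (boolP (u \in X)) => uX; first by case: (Au XA uX) => ->; rewrite eqxx.
  case: (boolP (v \in X)) => vX; first by case: (Au XA vX) => ->; rewrite eqxx orbT.
  rewrite Asub // andbT; apply/orP; right; apply/orP; right; apply/eqP => XY.
  by move: uX; rewrite XY inE connect0.
apply: (leq_trans (subset_leq_card sub)).
rewrite (cardsD1 Y (A E')) YA !cardsU1 add1n.
by rewrite addnA -add2n leq_add2r (leq_add (leq_b1 _) (leq_b1 _)).
Qed.


Lemma conn0 u z : connect (adj (set0 : {set {set 'I_n}})) u z -> z = u.
Proof.
move=> h; apply/eqP; move: h; apply: (conn_ind (S := pred1 u)) => [|a b _]; rewrite /= ?eqxx //.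
by rewrite /adj inE.
Qed.

Lemma kappa0 : n <= kappa (set0 : {set {set 'I_n}}).
Proof.
rewrite kappaA /A card_in_imset.
  rewrite (_ : [set w | _] = setT) ?cardsT ?card_ord //.
  apply/setP => w; rewrite !inE; apply/asboolP => [[c [sz _ cyc _]]].
  by move: cyc; case: c sz => [|x [|a p]] //= _; rewrite /adj inE.
move=> a b _ _ e; have : b \in Defs.comp set0 a by rewrite e inE connect0.
by rewrite inE => /conn0.
Qed.

Lemma proc_rcons (P : graph_class) r e E :
  proc P (rcons r e) E =
  (let F := proc P r E in if P n (e |: F) then e |: F else F).
Proof. by elim: r E => //= a r IH E. Qed.

Lemma invariant (P : graph_class) (r : seq {set 'I_n}) :
  good_class P -> uniq r -> (forall e, e \in r -> #|e| = 2) ->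
  [/\ proc P r set0 \subset [set e in r], P n (proc P r set0) &
      n <= #|proc P r set0| + kappa [set e in r]].
Proof.
move=> [[_ pB _ _ pE] pF]; elim/last_ind: r => [|r e IH].
  move=> _ _ /=; rewrite (_ : [set e in [::]] = set0); last by apply/setP => x; rewrite !inE.
  by rewrite sub0set pB cards0 kappa0.
rewrite rcons_uniq => /andP[er ur] sz.
have szr : forall f, f \in r -> #|f| = 2 by move=> f fr; apply: sz; rewrite mem_rcons inE fr orbT.
have [sFG PF le] := IH ur szr.
have GE : [set x in rcons r e] = e |: [set x in r].
  by apply/setP => x; rewrite !inE mem_rcons inE.
have /cards2P [x [y [xy ee]]] : #|e| == 2 by rewrite sz // mem_rcons inE eqxx.
set F := proc P r set0 in sFG PF le.
have simF : simple_graph F.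
  by move=> f /(subsetP sFG); rewrite inE => fr; apply: sz; rewrite mem_rcons inE fr orbT.
have eF : e \notin F by apply/negP => /(subsetP sFG); rewrite inE (negbTE er).
rewrite proc_rcons /= -/F GE; case: ifP => Pe.
  rewrite setUSS // Pe cardsU1 eF add1n; split=> //.
  apply: (leq_trans le); rewrite addSn -addnS leq_add2l ee; exact: K1.
split=> //; first exact: subset_trans sFG (subsetUr _ _).
apply: (leq_trans le); rewrite leq_add2l ee.
have cF : connect (adj F) x y.
  apply/negPn/negP => nc; have := pE n F x y simF PF nc; by rewrite -ee Pe.
apply: K2.
  by apply: connect_mono cF; exact: sFG.
move=> tG; have tF : tree_comp F x.
  by apply: tree_mono tG; exact: sFG.
have nadj : ~~ adj F x y by rewrite /adj -ee.
by have := pF n F x y simF PF xy nadj cF tF; rewrite -ee Pe.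
Qed.

End G.

Local Open Scope ring_scope.

Theorem mainTheorem6 (P : graph_class) (n : nat) (s : seq {set 'I_n}) (t : nat) :
  good_class P -> edge_ordering s -> (1 <= t <= size s)%N ->
  (t%:Z - #|Pnt P s t|%:Z <= excess (Gnt s t))%R.
Proof.
move=> gP [us es] /andP[_ ts].
have ut : uniq (take t s) by apply: take_uniq.
have st : forall e, e \in take t s -> #|e| = 2.
  by move=> e /mem_take; rewrite es => /eqP.
have [_ _ le] := invariant gP ut st.
have cG : #|Gnt s t| = t.
  by rewrite /Gnt cardsE (card_uniqP ut) size_takel.
rewrite /excess cG /Pnt.
move: le; set p := #|_|; set k := kappa _ => le.
lia.
Qed.
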